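(* Let $n \geq 1$ and fix integers $\lambda_2 \geq \lambda_3 \geq \cdots \geq \lambda_n \geq 0$. For integers $\lambda_1 \geq \lambda_2$ let $\lambda = (\lambda_1, \lambda_2, \ldots, \lambda_n)$. Then $A_\lambda(n)$, regarded as a function of $\lambda_1$, is a polynomial in $\lambda_1$ of degree $n-1$.
   Context: Six-vertex model: on an $r \times c$ grid there are $r$ horizontal lines and $c$ vertical lines meeting in $rc$ vertices. Each horizontal line consists of $c+1$ edges (the outermost ones are a left and a right boundary edge) and each vertical line of $r+1$ edges (the outermost ones are a top and a bottom boundary edge). A state assigns an orientation to every edge (left/right for horizontal edges, up/down for vertical edges), agreeing with prescribed orientations on the boundary edges, such that at every vertex exactly two of the four adjacent edges point into the vertex and two point out of it. For a partition $\lambda = (\lambda_1, \ldots, \lambda_n)$ (integers $\lambda_1 \geq \cdots \geq \lambda_n \geq 0$), $A_\lambda(n)$ is the number of states of the six-vertex model on the grid with $n$ rows and $n + \lambda_1$ columns with boundary conditions: all left boundary arrows point right, all right boundary arrows point left, all bottom boundary arrows point down, and, numbering the columns $1, 2, \ldots, n+\lambda_1$ from right to left, the top boundary arrow in column $i$ points up if $i \in \{\lambda_k + n + 1 - k : 1 \leq k \leq n\}$ and down otherwise. *)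

(* Defs.v *)
From mathcomp Require Import all_boot all_order all_algebra.
Set Implicit Arguments. Unset Strict Implicit. Unset Printing Implicit Defensive.

(* A partition lam = (lam_1, ..., lam_n) is given as a seq nat, lam_k = nth 0 lam (k-1).
   Grid: n rows (indexed i : 'I_n from top to bottom), m = n + lam_1 columns
   (indexed j : 'I_m from LEFT to right; the paper's column label, counted
   from right to left starting at 1, is m - j).
   Horizontal edges: hor (i, j) for j : 'I_m.+1; hor (i, j) is the edge to the
   left of vertex (i, j) (and j = m is the right boundary edge).
   Orientation bool: true = points right.
   Vertical edges: ver (i, j) for i : 'I_n.+1; ver (i, j) is the edge above
   vertex (i, j) (i = 0 top boundary, i = n bottom boundary).
   Orientation bool: true = points up. *)

Definition top_up (n : nat) (lam : seq nat) (c : nat) : bool :=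
  has (fun k => c == nth 0 lam k + n - k) (iota 0 n).
(* k (0-based) stands for k+1; lam_(k+1) + n + 1 - (k+1) = lam_(k+1) + n - k *)

Definition sv_state (n m : nat) : finType :=
  ({ffun 'I_n * 'I_m.+1 -> bool} * {ffun 'I_n.+1 * 'I_m -> bool})%type.

Definition sv_valid (n : nat) (lam : seq nat) (m : nat) (s : sv_state n m) : bool :=
  let hor := s.1 in let ver := s.2 in
  [&& [forall i : 'I_n, hor (i, ord0) && ~~ hor (i, ord_max)],
      [forall j : 'I_m, (ver (ord0, j) == top_up n lam (m - j)) && ~~ ver (ord_max, j)] &
      [forall i : 'I_n, forall j : 'I_m,
         (hor (i, inord j) : nat) + (~~ hor (i, inord j.+1) : nat)
         + (~~ ver (inord i, j) : nat) + (ver (inord i.+1, j) : nat) == 2]].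
(* ice rule: number of edges pointing into vertex (i,j) is 2:
   left edge points right, right edge points left, top edge points down,
   bottom edge points up. *)

Definition A (n : nat) (lam : seq nat) : nat :=
  #|[pred s : sv_state n (n + head 0 lam) | @sv_valid n lam (n + head 0 lam) s]|.

(* Main.v *)
Require Import Defs.
From mathcomp Require Import all_boot all_order all_algebra.
From mathcomp Require Import zify.
Set Implicit Arguments. Unset Strict Implicit. Unset Printing Implicit Defensive.

Definition ice (h h' x y : bool) : bool :=
  (h : nat) + (~~ h' : nat) + (~~ x : nat) + (y : nat) == 2.

Fixpoint run (h : bool) (t b : seq bool) : nat :=
  match t, b with
  | [::], [::] => ~~ h : nat
  | x :: t', y :: b' => ice h true x y * run true t' b' + ice h false x y * run false t' b'
  | _, _ => 0
  end.

Fixpoint allseq (k : nat) : seq (seq bool) :=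
  if k is k'.+1 then [seq x :: s | x <- [:: true; false], s <- allseq k'] else [:: [::]].

Fixpoint cnt (n : nat) (t : seq bool) : nat :=
  if n is n'.+1 then \sum_(b <- allseq (size t)) run true t b * cnt n' b
  else all negb t.

Definition H (h : bool) n t pre := \sum_(b <- allseq (size t)) run h t b * cnt n (pre ++ b).
Definition F n w e := cnt n (true :: nseq e false ++ w).

Lemma sum_allseqS k (G : seq bool -> nat) :
  \sum_(b <- allseq k.+1) G b = \sum_(s <- allseq k) G (true :: s) + \sum_(s <- allseq k) G (false :: s).
Proof. rewrite /= !big_cat !big_map big_nil; exact: (congr1 _ (addn0 _)). Qed.

Lemma mem_allseq k b : size b = k -> b \in allseq k.
Proof.
elim: k b => [|k IH] [|x b] //= [] /IH Hb.
rewrite /= !mem_cat; case: x.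
- by apply/orP; left; apply/mapP; exists b.
- by apply/orP; right; apply/orP; left; apply/mapP; exists b.
Qed.

Lemma sum_ge (T : eqType) (s : seq T) (G : T -> nat) b : b \in s -> G b <= \sum_(x <- s) G x.
Proof.
elim: s => [|y s IH] //; rewrite inE big_cons => /orP[/eqP ->|/IH]; first exact: leq_addr.
by move=> H1; apply: leq_trans H1 (leq_addl _ _).
Qed.

Lemma cnt_false n t : cnt n (false :: t) = cnt n t.
Proof.
elim: n t => [|n IH] t //=.
rewrite sum_allseqS /= big1 ?add0n; last by move=> s _.
by apply: eq_bigr => s _; rewrite IH /ice /= mul1n mul0n addn0.
Qed.

Lemma comp_nseq n a t : cnt n (nseq a false ++ t) = cnt n t.
Proof. by elim: a => [|a IH] //=; rewrite cnt_false. Qed.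

Lemma H_cons h n x t pre : H h n (x :: t) pre =
  ice h true x true * H true n t (rcons pre true) + ice h false x true * H false n t (rcons pre true)
  + (ice h true x false * H true n t (rcons pre false) + ice h false x false * H false n t (rcons pre false)).
Proof.
rewrite /H /= sum_allseqS /= !big_distrr -!big_split /=.
by apply: eq_bigr => s _; rewrite -!cat_rcons !mulnDl !mulnA.
Qed.

Lemma H_drop h n t a s : H h n t (nseq a false ++ s) = H h n t s.
Proof. by rewrite /H; apply: eq_bigr => b _; rewrite -catA comp_nseq. Qed.

Lemma Htrue_zeros n d w pre : H true n (nseq d false ++ w) pre = H true n w (pre ++ nseq d false).
Proof.
elim: d pre => [|d IH] pre /=; first by rewrite cats0.
by rewrite H_cons /ice /= !mul0n !add0n addn0 mul1n IH cat_rcons.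
Qed.

Lemma Hfalse_zeros n d w : H false n (nseq d false ++ w) [::] =
  H false n w [::] + \sum_(e < d) H true n w (true :: nseq e false).
Proof.
elim: d => [|d IH] /=; first by rewrite big_ord0 addn0.
rewrite H_cons /ice /= !mul0n !addn0 add0n !mul1n big_ord_recr /=.
rewrite (H_drop _ _ _ 1 [::]) IH Htrue_zeros /=; lia.
Qed.

Lemma key n w d : F n.+1 w d =
  H false n w [::] + \sum_(e < d.+1) \sum_(b <- allseq (size w)) run true w b * F n b e.
Proof.
have -> : F n.+1 w d = H true n (true :: nseq d false ++ w) [::] by [].
rewrite H_cons /ice /= !mul0n !addn0 !mul1n Htrue_zeros (H_drop _ _ _ 1 [::]) Hfalse_zeros.
have HF e : H true n w (true :: nseq e false) = \sum_(b <- allseq (size w)) run true w b * F n b e by [].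
rewrite big_ord_recr /= -HF; under eq_bigr do rewrite HF. lia.
Qed.

Lemma sum_bin d j : \sum_(e < d.+1) 'C(e, j) = 'C(d.+1, j.+1).
Proof.
elim: d => [|d IH]; first by rewrite big_ord_recr big_ord0 /=; case: j.
by rewrite big_ord_recr /= IH [in RHS]binS addnC.
Qed.

Lemma run_diag w : run false w w = 1.
Proof. by elim: w => [|[] w IH] //=; rewrite /ice /= IH. Qed.

Fixpoint rmfirst (s : seq bool) : seq bool :=
  match s with [::] => [::] | true :: s' => false :: s' | false :: s' => false :: rmfirst s' end.

Lemma run_rmfirst s : has id s -> run true s (rmfirst s) = 1.
Proof. by elim: s => [|[] s IH] //= Hs; rewrite /ice /= ?run_diag ?IH. Qed.

Lemma count_rmfirst s : count id (rmfirst s) = (count id s).-1.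
Proof. by elim: s => [|[] s IH] //=. Qed.

Lemma size_rmfirst s : size (rmfirst s) = size s.
Proof. by elim: s => [|[] s IH] //=; rewrite IH. Qed.

Lemma newton n : exists A : seq bool -> nat -> nat, forall w,
  (forall d, F n.+1 w d = \sum_(j < n.+1) A w j * 'C(d, j)) /\ (count id w = n -> 0 < A w n).
Proof.
elim: n => [|n [A IH]].
  exists (fun w _ => H false 0 w [::]) => w; split.
    move=> d; rewrite key big1 ?addn0; last first.
      by move=> e _; rewrite big1 // => b _; rewrite /F /= muln0.
    by rewrite big_ord_recr big_ord0 /= bin0 muln1.
  move=> Hw; rewrite /H; apply: leq_trans _ (sum_ge (fun b => run false w b * cnt 0 ([::] ++ b)) (mem_allseq (erefl (size w)))).
  rewrite run_diag /= mul1n lt0b all_count; apply/eqP.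
  by rewrite -(count_predC id w) Hw add0n; apply: eq_count => x.
exists (fun w j => (j == 0) * H false n.+1 w [::] + \sum_(b <- allseq (size w)) run true w b * ((0 < j) * A b j.-1 + (j < n.+1) * A b j)) => w; split.
  move=> d; rewrite key.
  set C0 := H false n.+1 w [::].
  transitivity (C0 + \sum_(b <- allseq (size w)) run true w b * \sum_(j < n.+1) A b j * 'C(d.+1, j.+1)).
    congr (_ + _); rewrite exchange_big /=; apply: eq_bigr => b _.
    rewrite -big_distrr /=; congr (_ * _).
    under eq_bigr do rewrite (proj1 (IH b)).
    rewrite exchange_big /=; apply: eq_bigr => j _.
    by rewrite -big_distrr /= sum_bin.
  under [in RHS]eq_bigr do rewrite mulnDl.
  rewrite big_split /= big_ord_recl /= bin0 muln1 (_ : \sum_(i < n.+1) 0 * C0 * 'C(d, bump 0 i) = 0) ?addn0; last by apply: big1 => i _; rewrite !mul0n.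
  rewrite mul1n; congr (_ + _).
  under [in RHS]eq_bigr do rewrite big_distrl /=.
  rewrite [in RHS]exchange_big /=; apply: eq_bigr => b _.
  under [in RHS]eq_bigr do rewrite -mulnA.
  rewrite -big_distrr /=; congr (_ * _).
  under eq_bigr do rewrite binS mulnDr.
  under [in RHS]eq_bigr do rewrite mulnDl.
  rewrite !big_split /= [X in _ = X + _]big_ord_recl [X in _ = _ + X]big_ord_recr /= ltnn !mul0n add0n addn0.
  congr (_ + _); apply: eq_bigr => i _; first by rewrite /bump /= mul1n.
  by rewrite /= ltn_ord mul1n.
move=> Hw.
have hw : has id w by rewrite has_count Hw.
apply: leq_trans _ (leq_trans (sum_ge (fun b => run true w b * ((0 < n.+1) * A b n.+1.-1 + (n.+1 < n.+1) * A b n.+1)) (mem_allseq (size_rmfirst w))) (leq_addl _ _)).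
rewrite run_rmfirst // mul1n /= ltnn mul0n addn0 mul1n.
by apply: (proj2 (IH _)); rewrite count_rmfirst Hw.
Qed.


Definition consf (X : Type) k (x : X) (g : {ffun 'I_k -> X}) : {ffun 'I_k.+1 -> X} :=
  [ffun i => if unlift ord0 i is Some j then g j else x].

Lemma consf0 (X : Type) k (x : X) g : @consf X k x g ord0 = x.
Proof. by rewrite ffunE unlift_none. Qed.

Lemma consfS (X : Type) k (x : X) g j : @consf X k x g (lift ord0 j) = g j.
Proof. by rewrite ffunE liftK. Qed.

Lemma sum_ffunS (X : finType) k (G : {ffun 'I_k.+1 -> X} -> nat) :
  \sum_f G f = \sum_(x : X) \sum_(g : {ffun 'I_k -> X}) G (consf x g).
Proof.
rewrite pair_big /= (reindex (fun p : X * {ffun 'I_k -> X} => consf p.1 p.2)) //.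
exists (fun f : {ffun 'I_k.+1 -> X} => (f ord0, [ffun j : 'I_k => f (lift ord0 j)])) => [[x g] _|f _] /=.
  by rewrite consf0; congr (_, _); apply/ffunP => j; rewrite ffunE consfS.
apply/ffunP => i; rewrite ffunE; case: unliftP => [j ->|->] //.
by rewrite ffunE.
Qed.

Lemma sum_ffun0 (X : finType) (G : {ffun 'I_0 -> X} -> nat) g0 :
  \sum_f G f = G g0.
Proof.
rewrite (big_pred1 g0) // => f /=; by apply/esym/eqP/ffunP => -[].
Qed.

Definition sq m (v : 'I_m -> bool) : seq bool := map v (enum 'I_m).

Lemma sq_consf m x (g : {ffun 'I_m -> bool}) : sq (consf x g) = x :: sq g.
Proof.
rewrite /sq enum_ordSl /= consf0 -map_comp; congr (_ :: _); apply: eq_map => j.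
by rewrite /= consfS.
Qed.

Lemma sum_ffun_seq m (G : seq bool -> nat) :
  \sum_(v : {ffun 'I_m -> bool}) G (sq v) = \sum_(b <- allseq m) G b.
Proof.
elim: m G => [|m IH] G.
  rewrite (sum_ffun0 _ [ffun i => false]) /= big_seq1 /sq.
  by rewrite enum_ord0.
rewrite sum_ffunS big_bool sum_allseqS /=.
by congr (_ + _); rewrite -IH; apply: eq_bigr => g _; rewrite sq_consf.
Qed.

Lemma forall_ordS m (P : 'I_m.+1 -> bool) : [forall j, P j] = P ord0 && [forall j : 'I_m, P (lift ord0 j)].
Proof.
apply/forallP/andP => [HP|[H0 /forallP H1] j]; first by split => //; apply/forallP => j.
by case: (unliftP ord0 j) => [j' ->|->].
Qed.

Lemma ord_maxS m : (ord_max : 'I_m.+2) = lift ord0 (ord_max : 'I_m.+1).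
Proof. by apply: val_inj. Qed.

Lemma widen_lift m (j : 'I_m) : widen_ord (leqnSn m.+1) (lift ord0 j) = lift ord0 (widen_ord (leqnSn m) j).
Proof. by apply: val_inj. Qed.

Lemma widen0 m : widen_ord (leqnSn m.+1) ord0 = ord0.
Proof. by apply: val_inj. Qed.

Lemma sq_S m (t : 'I_m.+1 -> bool) : sq t = t ord0 :: sq (fun j => t (lift ord0 j)).
Proof. by rewrite /sq enum_ordSl /= -map_comp. Qed.

Lemma sum_row m h0 (t b : 'I_m -> bool) :
  \sum_(h : {ffun 'I_m.+1 -> bool}) ((h ord0 == h0) && ~~ h ord_max &&
     [forall j : 'I_m, ice (h (widen_ord (leqnSn m) j)) (h (lift ord0 j)) (t j) (b j)] : nat)
  = run h0 (sq t) (sq b).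
Proof.
elim: m h0 t b => [|m IH] h0 t b.
  rewrite sum_ffunS big_bool /= !(sum_ffun0 _ [ffun i => false]) /= /sq enum_ord0 /=.
  have -> : (ord_max : 'I_1) = ord0 by apply: val_inj.
  rewrite !consf0.
  have Hf : forall P : pred 'I_0, [forall j, P j] by move=> P; apply/forallP => -[].
  by rewrite !Hf; case: h0.
rewrite sum_ffunS.
have E : forall x (g : {ffun 'I_m.+1 -> bool}),
  ((consf x g ord0 == h0) && ~~ consf x g ord_max &&
     [forall j : 'I_m.+1, ice (consf x g (widen_ord (leqnSn m.+1) j)) (consf x g (lift ord0 j)) (t j) (b j)] : nat)
  = (x == h0) * (ice h0 true (t ord0) (b ord0) * ((g ord0 == true) && ~~ g ord_max &&
        [forall j : 'I_m, ice (g (widen_ord (leqnSn m) j)) (g (lift ord0 j)) (t (lift ord0 j)) (b (lift ord0 j))])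
      + ice h0 false (t ord0) (b ord0) * ((g ord0 == false) && ~~ g ord_max &&
        [forall j : 'I_m, ice (g (widen_ord (leqnSn m) j)) (g (lift ord0 j)) (t (lift ord0 j)) (b (lift ord0 j))])).
  move=> x g; rewrite consf0 ord_maxS consfS forall_ordS widen0 consf0 consfS.
  under eq_forallb => j do rewrite widen_lift !consfS.
  case: eqP => [->|_] /=; last by rewrite mul0n.
  by case: (g ord0); case: (ice h0 true _ _); case: (ice h0 false _ _); case: (~~ g ord_max); case: [forall _, _].
under eq_bigr do under eq_bigr do rewrite E.
rewrite big_bool /=.
have Z : forall c, \sum_(g : {ffun 'I_m.+1 -> bool}) 0 * c g = 0 by move=> c; apply: big1 => g _.
case: h0 E => E; rewrite /= ?Z ?add0n ?addn0; under eq_bigr do rewrite mul1n;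
  rewrite big_split /= -!big_distrr /= !IH sq_S [sq b]sq_S. all: by [].
Qed.

Lemma sum_ver n m (T : {ffun 'I_m -> bool}) :
  \sum_(V : {ffun 'I_n.+1 -> {ffun 'I_m -> bool}})
     ((V ord0 == T) && [forall j, ~~ V ord_max j] : nat) *
     \prod_(i < n) run true (sq (V (widen_ord (leqnSn n) i))) (sq (V (lift ord0 i)))
  = cnt n (sq T).
Proof.
elim: n T => [|n IH] T.
  rewrite sum_ffunS.
  under eq_bigr do rewrite (sum_ffun0 _ [ffun i => T]).
  have -> : (ord_max : 'I_1) = ord0 by apply: val_inj.
  under eq_bigr do rewrite consf0 big_ord0 muln1.
  rewrite (bigD1 T) //= eqxx big1 ?addn0 => [|v /negbTE -> //].
  rewrite /sq all_map.
  have -> // : [forall j, ~~ T j] = all (preim T negb) (enum 'I_m).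
  apply/idP/idP => [/forallP HT|/allP HT].
    by apply/allP => j _; exact: HT.
  by apply/forallP => j; exact: (HT j (mem_enum _ _)).
rewrite sum_ffunS.
under eq_bigr do under eq_bigr do rewrite consf0 ord_maxS consfS big_ord_recl widen0 consf0 consfS.
under eq_bigr do under eq_bigr do under eq_bigr do rewrite widen_lift !consfS.
rewrite (bigD1 T) //= eqxx (_ : \sum_(v | v != T) _ = 0) ?addn0; last first.
  by apply: big1 => v /negbTE Hv; apply: big1 => g _; rewrite Hv.
rewrite /= /sq size_map size_enum_ord.
rewrite -(@sum_ffun_seq m (fun b => run true (map T (enum 'I_m)) b * cnt n b)).
under [in RHS]eq_bigr do rewrite -IH big_distrr /=.
rewrite [in RHS]exchange_big /=; apply: eq_bigr => V _.
rewrite (bigD1 (V ord0)) //= (_ : \sum_(i | i != V ord0) _ = 0) ?addn0; last first.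
  by apply: big1 => v Hv; rewrite eq_sym (negbTE Hv) /= !mul0n muln0.
by rewrite /sq /= mulnCA eqxx.
Qed.

Definition rowok m (h : {ffun 'I_m.+1 -> bool}) (t b : 'I_m -> bool) : bool :=
  (h ord0 == true) && ~~ h ord_max &&
  [forall j : 'I_m, ice (h (widen_ord (leqnSn m) j)) (h (lift ord0 j)) (t j) (b j)].

Definition validC n m (T : {ffun 'I_m -> bool}) (Hr : {ffun 'I_n -> {ffun 'I_m.+1 -> bool}})
  (V : {ffun 'I_n.+1 -> {ffun 'I_m -> bool}}) : bool :=
  (V ord0 == T) && [forall j, ~~ V ord_max j] &&
  [forall i : 'I_n, rowok (Hr i) (V (widen_ord (leqnSn n) i)) (V (lift ord0 i))].

Lemma inord_widen k (j : 'I_k) : inord j = widen_ord (leqnSn k) j :> 'I_k.+1.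
Proof. by apply: val_inj; rewrite /= inordK // ltnS ltnW. Qed.

Lemma inord_lift k (j : 'I_k) : inord j.+1 = lift ord0 j :> 'I_k.+1.
Proof. by apply: val_inj; rewrite /= inordK // ltnS ltn_ord. Qed.

Lemma valid_eq n lam m (T : {ffun 'I_m -> bool}) (HT : forall j, T j = top_up n lam (m - j)) (Hr : {ffun 'I_n -> {ffun 'I_m.+1 -> bool}}) (V : {ffun 'I_n.+1 -> {ffun 'I_m -> bool}}) :
  @sv_valid n lam m ([ffun p => Hr p.1 p.2], [ffun p => V p.1 p.2]) = validC T Hr V.
Proof.
rewrite /sv_valid /validC /rowok /=.
apply/idP/idP.
  case/and3P => /forallP H1 /forallP H2 /forallP H3.
  apply/andP; split; first (apply/andP; split).
  - apply/eqP/ffunP => j; have := H2 j; rewrite !ffunE /= HT; by case/andP => /eqP ->.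
  - apply/forallP => j; have := H2 j; rewrite !ffunE /=; by case/andP.
  - apply/forallP => i; have := H1 i; rewrite !ffunE /= => /andP[-> ->] /=.
    apply/forallP => j; have := H3 i; move/forallP/(_ j); rewrite !ffunE /=.
    by rewrite inord_widen inord_lift inord_widen inord_lift.
case/andP => /andP[/eqP HV /forallP H2] /forallP H3.
apply/and3P; split.
- apply/forallP => i; have := H3 i; rewrite !ffunE /=; by case/andP => /andP[/eqP -> ->].
- apply/forallP => j; rewrite !ffunE /= HV -HT eqxx /=; exact: H2.
- apply/forallP => i; apply/forallP => j; have := H3 i; case/andP => _ /forallP/(_ j).
  by rewrite !ffunE /= inord_widen inord_lift inord_widen inord_lift.
Qed.

Lemma sum_curry (I J X : finType) (G : {ffun I * J -> X} -> nat) :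
  \sum_f G f = \sum_(g : {ffun I -> {ffun J -> X}}) G [ffun p => g p.1 p.2].
Proof.
rewrite (reindex (fun g : {ffun I -> {ffun J -> X}} => [ffun p => g p.1 p.2])) //.
exists (fun f : {ffun I * J -> X} => [ffun i => [ffun j => f (i, j)]]) => [g _|f _].
  by apply/ffunP => i; apply/ffunP => j; rewrite !ffunE.
by apply/ffunP => -[i j]; rewrite !ffunE.
Qed.

Lemma forall_prod (I : finType) (P : pred I) : ([forall i, P i] : nat) = \prod_i (P i : nat).
Proof.
case: (boolP [forall i, P i]) => [/forallP HP|/forallPn [i Hi]].
  by rewrite big1 // => i _; rewrite HP.
by rewrite (bigD1 i) //= (negbTE Hi).
Qed.

Lemma card_valid n lam m (T : {ffun 'I_m -> bool}) (HT : forall j, T j = top_up n lam (m - j)) :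
  #|[pred s : sv_state n m | @sv_valid n lam m s]| = cnt n (sq T).
Proof.
rewrite -sum1_card big_mkcond /=.
transitivity (\sum_(a : {ffun 'I_n * 'I_m.+1 -> bool}) \sum_(b : {ffun 'I_n.+1 * 'I_m -> bool}) (@sv_valid n lam m (a, b) : nat)).
  rewrite pair_big /=; apply: eq_big => // -[a b] _; by rewrite inE; case: sv_valid.
rewrite sum_curry.
under eq_bigr do rewrite sum_curry.
under eq_bigr do under eq_bigr do rewrite (valid_eq HT).
rewrite exchange_big /= -(sum_ver n T); apply: eq_bigr => V _.
under eq_bigr do rewrite /validC -mulnb forall_prod.
rewrite -big_distrr /=; congr (_ * _).
rewrite -(@bigA_distr_bigA _ _ _ _ _ _ _ (fun i h => (rowok h (V (widen_ord (leqnSn n) i)) (V (lift ord0 i)) : nat))) /=.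
by apply: eq_bigr => i _; rewrite -sum_row.
Qed.

Import GRing.Theory Num.Theory.

Section Poly.
Local Open Scope ring_scope.

Fixpoint Bp (s j : nat) : {poly rat} :=
  if j is j'.+1 then ((j'.+1)%:R^-1) *: (Bp s j' * ('X - ((s + j')%:R)%:P)) else 1.

Lemma size_Bp s j : size (Bp s j) = j.+1.
Proof.
elim: j => [|j IH] /=; first by rewrite size_poly1.
rewrite size_scale; last by rewrite invr_eq0 pnatr_eq0.
rewrite (@size_Mmonic _ (Bp s j) _) ?monicXsubC // ?size_XsubC ?IH ?addn2 //.
by rewrite -size_poly_eq0 IH.
Qed.

Lemma Bp_eval s j x : (s <= x)%N -> (Bp s j).[x%:R] = ('C(x - s, j))%:R.
Proof.
move=> Hsx; elim: j => [|j IH] /=; first by rewrite hornerC bin0.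
rewrite hornerZ hornerM IH hornerXsubC.
have nz : (j.+1%:R : rat) != 0 by rewrite pnatr_eq0.
case: (leqP (s + j) x) => Hj.
  rewrite -natrB // -natrM (_ : x - (s + j) = x - s - j)%N; last by lia.
  by rewrite mulnC -mul_bin_left natrM mulrA mulVf // mul1r.
by rewrite !bin_small ?mul0r ?mulr0 //; lia.
Qed.

End Poly.

Definition Sseq n' (rest : seq nat) := [seq nth 0 rest k + n' - k | k <- iota 0 n'].
Definition wseq n' (rest : seq nat) :=
  [seq (n' + nth 0 rest 0 - i) \in Sseq n' rest | i <- iota 0 (n' + nth 0 rest 0)].

Lemma sorted_le (rest : seq nat) i j : sorted geq rest -> i <= j -> nth 0 rest j <= nth 0 rest i.
Proof.
move=> Hs Hij; case: (ltnP j (size rest)) => Hj; last by rewrite nth_default.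
have := @sorted_leq_nth _ geq (fun y x z h1 h2 => leq_trans h2 h1) leqnn 0 rest Hs i j.
by rewrite !inE; apply => //; apply: leq_ltn_trans Hj.
Qed.

Lemma S_bound n' rest x : sorted geq rest -> x \in Sseq n' rest -> 1 <= x <= n' + nth 0 rest 0.
Proof.
move=> Hs /mapP[k]; rewrite mem_iota => /andP[_ Hk] ->.
have := @sorted_le rest 0 k Hs (leq0n k); lia.
Qed.

Lemma top_up_eq n' l1 rest c : top_up n'.+1 (l1 :: rest) c = (c == l1 + n'.+1) || (c \in Sseq n' rest).
Proof.
rewrite /top_up /= subn0; congr (_ || _).
rewrite (_ : iota 1 n' = map (addn 1) (iota 0 n')); last by rewrite -iotaDl.
rewrite has_map; apply/hasP/mapP => [[k Hk /= /eqP ->]|[k Hk ->]]; exists k => //=.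
  by rewrite add0n; lia.
by rewrite add0n; apply/eqP; lia.
Qed.

Lemma map_constF (T : Type) (s : seq T) : map (fun _ => false) s = nseq (size s) false.
Proof. by elim: s => //= x s ->. Qed.

Lemma A_eq n' l1 rest : sorted geq rest -> nth 0 rest 0 <= l1 ->
  A n'.+1 (l1 :: rest) = F n'.+1 (wseq n' rest) (l1 - nth 0 rest 0).
Proof.
move=> Hs Hl.
rewrite /A /= (@card_valid _ _ _ [ffun j : 'I_(n'.+1 + l1) => top_up n'.+1 (l1 :: rest) (n'.+1 + l1 - j)]); last by move=> j; rewrite ffunE.
rewrite /F; congr cnt.
transitivity (map (fun j => top_up n'.+1 (l1::rest) (n'.+1 + l1 - j)) (iota 0 (n'.+1 + l1))).
  by rewrite /sq -val_enum_ord -map_comp; apply: eq_map => j; rewrite /= ffunE.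
set l2 := nth 0 rest 0.
have -> : iota 0 (n'.+1 + l1) = 0 :: iota 1 (l1 - l2) ++ map (addn (1 + (l1 - l2))) (iota 0 (n' + l2)).
  by rewrite -iotaDl addn0 -[0 :: _]/(iota 0 1 ++ _) -iotaD -iotaD; congr iota; lia.
rewrite /= map_cat top_up_eq subn0 addnC eqxx /=; congr (_ :: _ ++ _).
  rewrite -[in RHS](size_iota 1 (l1 - l2)) -map_constF; apply/eq_in_map => j.
  rewrite mem_iota top_up_eq => /andP[Hj1 Hj2].
  apply/negbTE; rewrite negb_or; apply/andP; split; first by apply/eqP; lia.
  by apply/negP => /(S_bound Hs); lia.
rewrite -map_comp /wseq; apply/eq_in_map => i; rewrite mem_iota => /andP[_ Hi] /=.
rewrite top_up_eq (_ : l1 + n'.+1 - (1 + (l1 - l2) + i) = n' + l2 - i); last by lia.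
by rewrite (_ : (n' + l2 - i == l1 + n'.+1) = false) //; apply/negbTE/eqP; lia.
Qed.

Lemma count_sub (s S : seq nat) : uniq S -> {subset S <= s} -> uniq s -> count (fun x => x \in S) s = size S.
Proof.
move=> US sub Us; rewrite -size_filter; apply: perm_size; apply: uniq_perm => //.
  exact: filter_uniq.
by move=> x; rewrite mem_filter; apply/andP/idP => [[]//|h]; split => //; apply: sub.
Qed.

Lemma count_w n' rest : size rest = n' -> sorted geq rest -> count id (wseq n' rest) = n'.
Proof.
move=> Hsz Hs; rewrite /wseq.
set N := n' + nth 0 rest 0.
have -> : count id [seq (N - i) \in Sseq n' rest | i <- iota 0 N] =
          count (fun x => x \in Sseq n' rest) [seq N - i | i <- iota 0 N] by rewrite !count_map.
rewrite count_sub ?size_map ?size_iota //.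
- rewrite map_inj_in_uniq ?iota_uniq // => i j; rewrite !mem_iota => /andP[_ Hi] /andP[_ Hj] Hij.
  case: (ltngtP i j) => // h.
    by have := @sorted_le rest i j Hs (ltnW h); lia.
  by have := @sorted_le rest j i Hs (ltnW h); lia.
- move=> x Hx; have := S_bound Hs Hx => /andP[H1 H2].
  apply/mapP; exists (N - x); last by lia.
  by rewrite mem_iota; apply/andP; split => //; lia.
- by rewrite map_inj_in_uniq ?iota_uniq // => i j; rewrite !mem_iota => /andP[_ Hi] /andP[_ Hj]; lia.
Qed.

Local Open Scope ring_scope.

Theorem theorem3 (n : nat) (rest : seq nat) :
  (1 <= n)%N -> size rest = n.-1 -> sorted geq rest ->
  exists p : {poly rat}, size p = n /\
    forall l1 : nat, (nth 0 rest 0 <= l1)%N ->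
      (A n (l1 :: rest))%:R = p.[l1%:R].
Proof.
case: n => [//|n'] _ /= Hsz Hs.
have [A0 HA] := newton n'.
set w := wseq n' rest.
have [HF Hpos] := HA w.
have Hlead := Hpos (count_w Hsz Hs).
exists (\sum_(j < n'.+1) (A0 w j)%:R *: Bp (nth 0%N rest 0%N) j); split.
  have nz : (A0 w n')%:R != 0 :> rat by rewrite pnatr_eq0 -lt0n.
  rewrite big_ord_recr /= addrC size_polyDl size_scale ?size_Bp //.
  apply: leq_ltn_trans (size_sum _ _ _) _; rewrite ltnS.
  apply/bigmax_leqP => i _; apply: leq_trans (size_scale_leq _ _) _.
  by rewrite size_Bp.
move=> l1 Hl; rewrite (@A_eq n' l1 rest Hs Hl) HF horner_sum natr_sum.
apply: eq_bigr => j _; by rewrite hornerZ Bp_eval // natrM.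
Qed.
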